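(* Let $M$ be a strong $r$-helix hypersurface in $E^n$ with unit normal vector field $N$ and space of helix directions $H(M)\subset\mathbb{R}^n$. Let $\alpha: I\subset\mathbb{R}\to M$ be a curve on $M$, and suppose there exists $d_j\in H(M)$ such that $d_j\notin T_pM$ for every $p=\alpha(t)$, $t\in I$. Let $\eta: M\to S^{n-1}$, $\eta(P)=N(P)$, be the Gauss transformation of $M$. Then the curve $\beta(t)=\eta(\alpha(t))=N|_{\alpha(t)}$ is not a geodesic curve on the unit hypersphere $S^{n-1}\subset E^n$.
   Context: $\langle\cdot,\cdot\rangle$ is the standard inner product on $E^n=\mathbb{R}^n$. For a hypersurface $M\subset\mathbb{R}^n$ with unit normal $N$, a vector $d$ is a helix direction of $M$ if the angle between $d$ and $T_pM$ is the same for all $p\in M$, equivalently $\langle N,d\rangle$ is constant on $M$. $H(M)$ is the set of helix directions; $M$ is a strong $r$-helix if $H(M)$ is an $r$-dimensional linear subspace of $\mathbb{R}^n$. A curve on $S^{n-1}$ is a geodesic of $S^{n-1}$ if its second derivative is normal to $S^{n-1}$ at each point. *)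

(* Defs.v *)
From HB Require Import structures.
From mathcomp Require Import all_boot all_order all_algebra.
From mathcomp Require Import all_classical all_reals all_analysis.
Set Implicit Arguments. Unset Strict Implicit. Unset Printing Implicit Defensive.
Import Order.TTheory GRing.Theory Num.Theory.
Import numFieldNormedType.Exports.
Local Open Scope classical_set_scope.
Local Open Scope ring_scope.

Section Defs.
Variables (R : realType) (n : nat).
Local Notation V := 'rV[R]_n.

Definition dotp (u v : V) : R := \sum_(i < n) u ord0 i * v ord0 i.

Definition tangent_space (M : set V) (p : V) : set V :=
  [set v | exists g : R -> V,
     g 0 = p /\ (\forall t \near (0 : R), M (g t)) /\ is_derive (0 : R) 1 g v].

(* M is a hypersurface: each tangent space T_pM (p in M) is an
   (n-1)-dimensional linear subspace of R^n, given as the row space of a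
   row-free (n-1) x n matrix. *)
Definition is_hypersurface (M : set V) : Prop :=
  forall p, M p -> exists B : 'M[R]_(n.-1, n),
    row_free B /\ forall v : V, tangent_space M p v <-> (v <= B)%MS.

Definition unit_normal_field (M : set V) (N : V -> V) : Prop :=
  {within M, continuous N} /\
  forall p, M p -> dotp (N p) (N p) = 1 /\
    forall v, tangent_space M p v -> dotp (N p) v = 0.

Definition helix_direction (M : set V) (N : V -> V) (d : V) : Prop :=
  exists c : R, forall p, M p -> dotp (N p) d = c.

Definition strong_helix (M : set V) (N : V -> V) (r : nat) : Prop :=
  exists B : 'M[R]_(r, n),
    row_free B /\ forall d : V, helix_direction M N d <-> (d <= B)%MS.

(* beta is a geodesic of the unit hypersphere S^{n-1} on the set I:
   beta lies on S^{n-1}, is twice differentiable, and its second derivative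
   is normal to S^{n-1} (i.e. parallel to the position vector). *)
Definition sphere_geodesic_on (I : set R) (beta : R -> V) : Prop :=
  forall t, I t ->
    dotp (beta t) (beta t) = 1 /\
    derivable beta t 1 /\ derivable (derive1 beta) t 1 /\
    exists lam : R, derive1 (derive1 beta) t = lam *: beta t.
End Defs.

(* Main.v *)
Require Import Defs.
From HB Require Import structures.
From mathcomp Require Import all_boot all_order all_algebra.
From mathcomp Require Import all_classical all_reals all_analysis.
From mathcomp Require Import ring lra.
Set Implicit Arguments. Unset Strict Implicit.
Import Order.TTheory GRing.Theory Num.Theory.
Import numFieldNormedType.Exports.
Local Open Scope classical_set_scope.
Local Open Scope ring_scope.

Section S.
Variables (R : realType) (n : nat).
Local Notation V := 'rV[R]_n.

Definition coord (i : 'I_n) (v : V) : R^o := v ord0 i.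
Lemma coord_lin i : linear (coord i).
Proof. by move=> k u v; rewrite /coord !mxE. Qed.
HB.instance Definition _ i := GRing.isLinear.Build R V R^o *:%R (coord i) (coord_lin i).

Lemma coord_derive (f : R -> V) t i : derivable f t 1 ->
  is_derive t 1 (fun x => f x ord0 i : R^o) ('D_1 f t ord0 i).
Proof.
move=> df.
have dc : differentiable (coord i) (f t) by apply: linear_differentiable; exact: coord_continuous.
have dfd : differentiable f t by apply/derivable1_diffP.
have dcomp : differentiable (coord i \o f) t := differentiable_comp dfd dc.
have -> : (fun x => f x ord0 i : R^o) = coord i \o f by [].
apply: DeriveDef; first exact/derivable1_diffP.
rewrite deriveE // diff_comp // diff_lin //=; [by rewrite -deriveE|exact: coord_continuous].
Qed.

Lemma dotp_derive (f g : R -> V) t : derivable f t 1 -> derivable g t 1 ->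
  is_derive t 1 (fun x => dotp (f x) (g x) : R^o)
    (dotp ('D_1 f t) (g t) + dotp (f t) ('D_1 g t)).
Proof.
move=> df dg.
have -> : (fun x => dotp (f x) (g x) : R^o) =
  \sum_(i < n) ((fun x => f x ord0 i : R^o) * (fun x => g x ord0 i : R^o)).
  by rewrite fct_sumE; apply/funext => x; rewrite /dotp.
apply: is_derive_eq.
  apply: is_derive_sum => i; apply: is_deriveM; exact: coord_derive.
rewrite /dotp -big_split /=; apply: eq_bigr => i _.
by rewrite /GRing.scale /= addrC [X in _ + X]mulrC.
Qed.

Lemma deriv_near_cst (h : R -> R^o) t (c dh : R) :
  (\forall x \near t, h x = c) -> is_derive t 1 h dh -> dh = 0.
Proof.
move=> hc dh1.
have : is_derive t 1 (cst c : R -> R^o) dh.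
  apply: (near_eq_is_derive _ dh1); near=> x; exact: (near hc x).
move=> /(@derive_val _ _ _ _ _ _ _) <-.
by rewrite derive_cst.
Unshelve. all: by end_near.
Qed.

Lemma tangent_of_orth (M : set V) (N : V -> V) p d :
  is_hypersurface M -> unit_normal_field M N -> M p ->
  dotp (N p) d = 0 -> tangent_space M p d.
Proof.
move=> hM [_ hN] Mp hd.
have [B [rfB HB]] := hM p Mp.
have [u1 uorth] := hN p Mp.
set u := N p in u1 uorth hd.
have u0 : u != 0.
  apply/negP => /eqP u0; move: u1; rewrite u0 /dotp.
  rewrite big1 => [/eqP|i _]; last by rewrite mxE mul0r.
  by rewrite eq_sym oner_eq0.
have sBK : (B <= kermx u^T)%MS.
  apply/sub_kermxP/matrixP => i j; rewrite !mxE.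
  rewrite -[RHS](uorth (row i B) (proj2 (HB _) (row_sub i B))) /dotp.
  apply: eq_bigr => k _.
  by rewrite !mxE (ord1 j) mulrC.
have rK : \rank (kermx u^T) = n.-1.
  by rewrite mxrank_ker mxrank_tr rank_rV u0 subn1.
have /andP[_ sKB] : (B == kermx u^T)%MS.
  by rewrite -(mxrank_leqif_eq sBK).2 rK; move/eqP: rfB => ->.
apply/HB; apply: submx_trans sKB.
apply/sub_kermxP/matrixP => i j; rewrite !mxE.
rewrite -[RHS]hd /dotp; apply: eq_bigr => k _.
by rewrite !mxE (ord1 i) (ord1 j) mulrC.
Qed.

Lemma dotpC (u v : V) : dotp u v = dotp v u.
Proof. by rewrite /dotp; apply: eq_bigr => i _; rewrite mulrC. Qed.
Lemma dotpBl (u v w : V) : dotp (u - v) w = dotp u w - dotp v w.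
Proof.
rewrite /dotp -sumrB; apply: eq_bigr => i _; rewrite !mxE; ring.
Qed.
Lemma dotpZl k (u w : V) : dotp (k *: u) w = k * dotp u w.
Proof.
rewrite /dotp mulr_sumr; apply: eq_bigr => i _; rewrite !mxE; ring.
Qed.
Lemma dotp0r (u : V) : dotp u 0 = 0.
Proof. by rewrite /dotp big1 // => i _; rewrite mxE mulr0. Qed.
Lemma dotp0l (u : V) : dotp 0 u = 0.
Proof. by rewrite dotpC dotp0r. Qed.
Lemma dotp_eq0 (u : V) : dotp u u = 0 -> u = 0.
Proof.
rewrite /dotp => /eqP; rewrite psumr_eq0 => [/allP H|i _]; last by rewrite -expr2 sqr_ge0.
apply/matrixP => i j; rewrite (ord1 i) mxE.
have := H j (mem_index_enum j); rewrite /= mulf_eq0 orbb => /eqP ->//.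
Qed.
End S.

Unset Implicit Arguments.

Theorem theorem3p3 (R : realType) (n r : nat) (M : set 'rV[R]_n)
    (N : 'rV[R]_n -> 'rV[R]_n) (a b : R) (alpha : R -> 'rV[R]_n)
    (dj : 'rV[R]_n) :
  is_hypersurface M ->
  unit_normal_field M N ->
  strong_helix M N r ->
  a < b ->
  (forall t, t \in `]a, b[ -> M (alpha t) /\ derivable alpha t 1) ->
  helix_direction M N dj ->
  (forall t, t \in `]a, b[ -> ~ tangent_space M (alpha t) dj) ->
  (exists s t, [/\ s \in `]a, b[, t \in `]a, b[ & N (alpha s) != N (alpha t)]) ->
  ~ sphere_geodesic_on [set t | t \in `]a, b[] (N \o alpha).
Proof.
move=> hM hN _ _ hal [c hc] hnt [s [t2 [sI tI hne]]] hgeo.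
set be := N \o alpha.
have Ma x : x \in `]a, b[ -> M (alpha x) by move=> /hal [].
have c0 : c != 0.
  apply/eqP => c0; apply: (hnt s sI); apply: (tangent_of_orth hM hN (Ma _ sI)).
  by rewrite (hc _ (Ma _ sI)).
have nearI x : x \in `]a, b[ -> \forall y \near x, y \in `]a, b[.
  exact: near_in_itvoo.
have derZ (h : R -> R^o) x dh cc : x \in `]a, b[ ->
    (forall y, y \in `]a, b[ -> h y = cc) -> is_derive x 1 h dh -> dh = 0.
  move=> xI hy D; apply: (deriv_near_cst (c := cc) _ D).
  by apply: filterS (nearI x xI); exact: hy.
have P1 x : x \in `]a, b[ -> dotp (be x) (derive1 be x) = 0.
  move=> xI; have [h1 [db [db' _]]] := hgeo x xI.
  have := derZ _ x _ 1 xI _ (dotp_derive db db).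
  rewrite -derive1E dotpC => /(_ _) H.
  suff : dotp (be x) (derive1 be x) + dotp (be x) (derive1 be x) = 0 by lra.
  by apply: H => y yI; have [] := hgeo y yI.
have P3 x : x \in `]a, b[ -> dotp (derive1 be x) dj = 0.
  move=> xI; have [h1 [db [db' _]]] := hgeo x xI.
  have := derZ _ x _ c xI _ (dotp_derive db (derivable_cst dj x 1)).
  rewrite -derive1E derive_cst dotp0r addr0; apply => y yI.
  exact: hc (Ma _ yI).
have P0 x : x \in `]a, b[ -> derive1 be x = 0.
  move=> xI; have [h1 [db [db' [lam hlam]]]] := hgeo x xI.
  have := derZ _ x _ 0 xI P3 (dotp_derive db' (derivable_cst dj x 1)).
  rewrite -derive1E derive_cst dotp0r addr0 hlam dotpZl (hc _ (Ma _ xI)).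
  move=> /eqP; rewrite mulf_eq0 (negbTE c0) orbF => /eqP lam0.
  have := derZ _ x _ 0 xI P1 (dotp_derive db db').
  rewrite -!derive1E hlam lam0 scale0r dotp0r addr0.
  by move=> /dotp_eq0.
have key x y : x \in `]a, b[ -> y \in `]a, b[ -> x < y -> be x = be y.
  move=> xI yI xy; set w := be y - be x.
  have sub z : z \in `[x, y] -> z \in `]a, b[.
    move: xI yI; rewrite !in_itv /= => /andP[ax xb] /andP[ay yb] /andP[xz zy].
    by rewrite (lt_le_trans ax xz) (le_lt_trans zy yb).
  have D z : z \in `[x, y] -> is_derive z 1 (fun u => dotp (be u) w : R^o) 0.
    move=> /sub zI; have [_ [db _]] := hgeo z zI.
    apply: is_derive_eq (dotp_derive db (derivable_cst w z 1)) _.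
    by rewrite derive_cst dotp0r addr0 -derive1E P0 // dotp0l.
  have cont : {within `[x, y], continuous (fun u => dotp (be u) w : R^o)}.
    apply: derivable_within_continuous => z zI.
    by have [] := D z zI.
  have [z _] := MVT (df := fun _ => 0) xy
    (fun z zI => D z (subset_itv_oo_cc zI)) cont.
  rewrite mul0r -dotpBl => /dotp_eq0 /eqP; rewrite subr_eq0 => /eqP.
  done.
move: hne; case: (ltgtP s t2) => [st|ts|->]; last by rewrite eqxx.
  by have := key _ _ sI tI st; rewrite /be /= => ->; rewrite eqxx.
by have := key _ _ tI sI ts; rewrite /be /= => ->; rewrite eqxx.
Qed.
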